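(* For any formula $A$, there exists an adequate $A$-removing mapping $\mathsf{re}_A:\mathcal P\times\mathcal P\to\mathcal P$.
   Context: Formulas are built from $\bot$ and atoms by $\to$ and $\Box$; sequents $\Gamma\Rightarrow\Delta$ have finite multisets of formulas on each side; $\Box\Pi$ denotes $\{\Box B:B\in\Pi\}$. The calculus $\mathsf{Grz}_\infty+\mathsf{cut}$ has initial sequents $\Gamma,p\Rightarrow p,\Delta$ ($p$ atomic), $\Gamma,\bot\Rightarrow\Delta$, and rules $(\to_L)$ from $\Gamma,B\Rightarrow\Delta$ and $\Gamma\Rightarrow A,\Delta$ infer $\Gamma,A\to B\Rightarrow\Delta$; $(\to_R)$ from $\Gamma,A\Rightarrow B,\Delta$ infer $\Gamma\Rightarrow A\to B,\Delta$; $(\mathsf{refl})$ from $\Gamma,B,\Box B\Rightarrow\Delta$ infer $\Gamma,\Box B\Rightarrow\Delta$; $(\Box)$ from left premise $\Gamma,\Box\Pi\Rightarrow A,\Delta$ and right premise $\Box\Pi\Rightarrow A$ infer $\Gamma,\Box\Pi\Rightarrow\Box A,\Delta$; $(\mathsf{cut})$ from $\Gamma\Rightarrow A,\Delta$ and $\Gamma,A\Rightarrow\Delta$ infer $\Gamma\Rightarrow\Delta$. An $\infty$-proof is a possibly infinite tree of sequents built by these rules with leaves labelled by initial sequents, in which every infinite branch passes through a right premise of $(\Box)$ infinitely often; $\mathcal P$ is the set of all $\infty$-proofs. The $n$-fragment of an $\infty$-proof is the finite tree obtained by cutting every branch at the $n$-th (from the root) right premise of $(\Box)$. Write $\pi\sim_n\tau$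 if the $n$-fragments of $\pi,\tau$ coincide, and $\pi\sim_0\tau$ always. $\mathcal P_n$ is the set of $\infty$-proofs with no application of $(\mathsf{cut})$ in their $n$-fragment, and $\mathcal P_0=\mathcal P$. A pair $(\pi,\tau)$ is a cut pair with cut formula $A$ and cut result $\Gamma\Rightarrow\Delta$ if $\pi$ is an $\infty$-proof of $\Gamma\Rightarrow\Delta,A$ and $\tau$ is an $\infty$-proof of $A,\Gamma\Rightarrow\Delta$. A mapping $\mathsf u:\mathcal P\times\mathcal P\to\mathcal P$ is $A$-removing if it is non-expansive (i.e. $\pi\sim_n\pi'$ and $\tau\sim_n\tau'$ imply $\mathsf u(\pi,\tau)\sim_n\mathsf u(\pi',\tau')$ for all $n$) and maps every cut pair with cut formula $A$ to an $\infty$-proof of its cut result. It is adequate if for every $n\in\mathbb N$, $\pi,\tau\in\mathcal P_n$ implies $\mathsf u(\pi,\tau)\in\mathcal P_n$. *)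

(* Defs.v *)
From Stdlib Require Import List Permutation Arith.
Import ListNotations.

Inductive formula : Type :=
| Var : nat -> formula
| Bot : formula
| Imp : formula -> formula -> formula
| Bx  : formula -> formula.

(* Sequents Gamma => Delta; finite multisets are represented by lists,
   always compared up to permutation. *)
Definition sequent : Type := (list formula * list formula)%type.

Definition seq_eq (s1 s2 : sequent) : Prop :=
  Permutation (fst s1) (fst s2) /\ Permutation (snd s1) (snd s2).

(* For rBox, child 0 is the left premise, child 1 the right
   premise; for rImpL child 0 is the premise Gamma,B=>Delta and child 1 is
   Gamma=>A,Delta; for rCut child 0 is Gamma=>A,Delta and child 1 is
   Gamma,A=>Delta. *)
Inductive rule : Type :=
| rAxVar | rAxBot | rImpL | rImpR | rRefl | rBox | rCut.

CoInductive tree : Type :=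
| node : sequent -> rule -> list tree -> tree.

Definition t_seq (t : tree) : sequent := match t with node s _ _ => s end.
Definition t_rule (t : tree) : rule := match t with node _ r _ => r end.
Definition t_kids (t : tree) : list tree := match t with node _ _ ts => ts end.

Definition local_ok (t : tree) : Prop :=
  let '(G, D) := t_seq t in
  match t_rule t, t_kids t with
  | rAxVar, [] => exists p, In (Var p) G /\ In (Var p) D
  | rAxBot, [] => In Bot G
  | rImpL, [c1; c2] => exists Gm Dl A B,
      seq_eq (G, D) (Imp A B :: Gm, Dl) /\
      seq_eq (t_seq c1) (B :: Gm, Dl) /\ seq_eq (t_seq c2) (Gm, A :: Dl)
  | rImpR, [c] => exists Gm Dl A B,
      seq_eq (G, D) (Gm, Imp A B :: Dl) /\ seq_eq (t_seq c) (A :: Gm, B :: Dl)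
  | rRefl, [c] => exists Gm Dl B,
      seq_eq (G, D) (Bx B :: Gm, Dl) /\ seq_eq (t_seq c) (B :: Bx B :: Gm, Dl)
  | rBox, [c1; c2] => exists Gm Pi Dl A,
      seq_eq (G, D) (Gm ++ map Bx Pi, Bx A :: Dl) /\
      seq_eq (t_seq c1) (Gm ++ map Bx Pi, A :: Dl) /\
      seq_eq (t_seq c2) (map Bx Pi, [A])
  | rCut, [c1; c2] => exists A,
      seq_eq (t_seq c1) (G, A :: D) /\ seq_eq (t_seq c2) (A :: G, D)
  | _, _ => False
  end.

Fixpoint follow (t : tree) (p : list nat) : option tree :=
  match p with
  | [] => Some t
  | i :: p' => match nth_error (t_kids t) i with
               | Some c => follow c p'
               | None => None
               end
  end.

Definition rbstep (t : tree) (i : nat) : bool :=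
  match t_rule t with rBox => Nat.eqb i 1 | _ => false end.

Fixpoint rbcount (t : tree) (p : list nat) : nat :=
  match p with
  | [] => 0
  | i :: p' => (if rbstep t i then 1 else 0) +
               match nth_error (t_kids t) i with
               | Some c => rbcount c p'
               | None => 0
               end
  end.

Definition prefix (d : nat -> nat) (k : nat) : list nat := map d (seq 0 k).

Definition inf_branch (t : tree) (d : nat -> nat) : Prop :=
  forall k, follow t (prefix d k) <> None.

Definition is_proof (t : tree) : Prop :=
  (forall p s, follow t p = Some s -> local_ok s) /\
  (forall d, inf_branch t d ->
     forall k, exists j, k <= j /\
       exists s, follow t (prefix d j) = Some s /\ rbstep s (d j) = true).

Definition proof : Type := { t : tree | is_proof t }.
Definition ptree (p : proof) : tree := proj1_sig p.

(* feq n t1 t2 : the n-fragments of t1 and t2 coincide. The n-fragment cuts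
   every branch at the n-th right premise of (Box); such a right premise
   remains as a leaf (only its sequent belongs to the fragment).
   feq 0 holds always. *)
CoInductive feq : nat -> tree -> tree -> Prop :=
| feq0 : forall t1 t2, feq 0 t1 t2
| feqS : forall k s1 s2 r ts1 ts2,
    seq_eq s1 s2 ->
    length ts1 = length ts2 ->
    (forall i c1 c2, nth_error ts1 i = Some c1 -> nth_error ts2 i = Some c2 ->
       (rbstep (node s1 r ts1) i = true ->
          seq_eq (t_seq c1) (t_seq c2) /\ feq k c1 c2) /\
       (rbstep (node s1 r ts1) i = false -> feq (S k) c1 c2)) ->
    feq (S k) (node s1 r ts1) (node s2 r ts2).

Definition sim (n : nat) (p q : proof) : Prop := feq n (ptree p) (ptree q).

Definition in_Pn (n : nat) (p : proof) : Prop :=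
  forall path s, follow (ptree p) path = Some s ->
    rbcount (ptree p) path < n -> t_rule s <> rCut.

Definition proves (p : proof) (s : sequent) : Prop := seq_eq (t_seq (ptree p)) s.

Definition non_expansive (u : proof -> proof -> proof) : Prop :=
  forall n p p' q q', sim n p p' -> sim n q q' -> sim n (u p q) (u p' q').

Definition removing (A : formula) (u : proof -> proof -> proof) : Prop :=
  non_expansive u /\
  forall (G D : list formula) (p q : proof),
    proves p (G, D ++ [A]) -> proves q (A :: G, D) -> proves (u p q) (G, D).

Definition adequate (u : proof -> proof -> proof) : Prop :=
  forall n p q, in_Pn n p -> in_Pn n q -> in_Pn n (u p q).

(* Main.v *)
Require Import Defs.
From Stdlib Require Import List Permutation Arith Lia Classical ClassicalEpsilon
  FunctionalExtensionality PropExtensionality ClassicalDescription.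
Import ListNotations.

Inductive U : Type := Root | Br (i : nat) (u : U).

Fixpoint sat (R : U -> U -> Prop) (V : nat -> U -> Prop) (w : U) (f : formula) {struct f} : Prop :=
  match f with
  | Var p => V p w
  | Bot => False
  | Imp A B => sat R V w A -> sat R V w B
  | Bx A => forall v, R w v -> sat R V v A
  end.

Definition frame (R : U -> U -> Prop) : Prop :=
  (forall w, R w w) /\ (forall a b c, R a b -> R b c -> R a c) /\
  well_founded (fun v w => R w v /\ v <> w).

Definition false_at R V w (s : sequent) : Prop :=
  (forall f, In f (fst s) -> sat R V w f) /\ (forall f, In f (snd s) -> ~ sat R V w f).

Definition valid (s : sequent) : Prop :=
  forall R V, frame R -> forall w, ~ false_at R V w s.

Lemma seq_eq_sym s1 s2 : seq_eq s1 s2 -> seq_eq s2 s1.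
Proof. intros [H1 H2]; split; apply Permutation_sym; auto. Qed.

Lemma false_at_perm R V w s1 s2 : seq_eq s1 s2 -> false_at R V w s1 -> false_at R V w s2.
Proof.
  intros [H1 H2] [F1 F2]; split; intros f Hf.
  - apply F1. eapply Permutation_in; [apply Permutation_sym; eauto| auto].
  - apply F2. eapply Permutation_in; [apply Permutation_sym; eauto| auto].
Qed.

Lemma local_sound R V w t : frame R -> local_ok t -> false_at R V w (t_seq t) ->
  exists i c, nth_error (t_kids t) i = Some c /\
   ((rbstep t i = false /\ false_at R V w (t_seq c)) \/
    (rbstep t i = true /\ exists v, R w v /\ v <> w /\ false_at R V v (t_seq c))).
Proof.
  intros [Hr [Ht _]] Hl Hf.
  destruct t as [[G D] r ts]. unfold local_ok in Hl. simpl in Hl, Hf |- *.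
  destruct r; destruct ts as [|c1 [|c2 [|c3 ts]]]; try contradiction.
  - destruct Hl as [p [H1 H2]]. destruct Hf as [F1 F2]. exfalso. apply (F2 _ H2). apply F1; auto.
  - destruct Hf as [F1 _]. exfalso. apply (F1 _ Hl).
  - destruct Hl as [Gm [Dl [A [B [E [E1 E2]]]]]].
    apply (false_at_perm _ _ _ _ _ E) in Hf. destruct Hf as [F1 F2]. simpl in F1, F2.
    destruct (classic (sat R V w A)) as [HA|HA].
    + exists 0, c1. split; [reflexivity|]. left. split; [reflexivity|].
      apply (false_at_perm _ _ _ _ _ (seq_eq_sym _ _ E1)). split; simpl.
      * intros f [<-|Hf]; auto. apply (F1 (Imp A B)); auto.
      * auto.
    + exists 1, c2. split; [reflexivity|]. left. split; [reflexivity|].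
      apply (false_at_perm _ _ _ _ _ (seq_eq_sym _ _ E2)). split; simpl.
      * auto.
      * intros f [<-|Hf]; auto.
  - destruct Hl as [Gm [Dl [A [B [E E1]]]]].
    apply (false_at_perm _ _ _ _ _ E) in Hf. destruct Hf as [F1 F2]. simpl in F1, F2.
    exists 0, c1. split; [reflexivity|]. left. split; [reflexivity|].
    apply (false_at_perm _ _ _ _ _ (seq_eq_sym _ _ E1)).
    assert (HI : ~ (sat R V w A -> sat R V w B)) by (apply (F2 (Imp A B)); auto).
    split; simpl.
    + intros f [<-|Hf]; auto. apply NNPP; intro; apply HI; intro; contradiction.
    + intros f [<-|Hf]; auto.
  - destruct Hl as [Gm [Dl [B [E E1]]]].
    apply (false_at_perm _ _ _ _ _ E) in Hf. destruct Hf as [F1 F2]. simpl in F1, F2.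
    exists 0, c1. split; [reflexivity|]. left. split; [reflexivity|].
    apply (false_at_perm _ _ _ _ _ (seq_eq_sym _ _ E1)). split; simpl; auto.
    assert (HB : sat R V w (Bx B)) by (apply F1; auto).
    intros f [<-|[<-|Hf]]; auto.
  - destruct Hl as [Gm [Pi [Dl [A [E [E1 E2]]]]]].
    apply (false_at_perm _ _ _ _ _ E) in Hf. destruct Hf as [F1 F2]. simpl in F1, F2.
    assert (HB : ~ sat R V w (Bx A)) by (apply F2; auto).
    destruct (classic (sat R V w A)) as [HA|HA].
    + simpl in HB. destruct (not_all_ex_not _ _ HB) as [v Hv].
      apply imply_to_and in Hv. destruct Hv as [Rv Av].
      exists 1, c2. split; [reflexivity|]. right. split; [reflexivity|].
      exists v. split; auto. split; [intro; subst; auto|].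
      apply (false_at_perm _ _ _ _ _ (seq_eq_sym _ _ E2)). split; simpl.
      * intros f Hf. apply in_map_iff in Hf. destruct Hf as [B [<- HB']].
        intros v' Hv'. apply (F1 (Bx B)); [apply in_or_app; right; apply in_map; auto|].
        eapply Ht; eauto.
      * intros f [<-|[]]; auto.
    + exists 0, c1. split; [reflexivity|]. left. split; [reflexivity|].
      apply (false_at_perm _ _ _ _ _ (seq_eq_sym _ _ E1)). split; simpl; auto.
      intros f [<-|Hf]; auto.
  - destruct Hl as [A [E1 E2]]. destruct Hf as [F1 F2]. simpl in F1, F2.
    destruct (classic (sat R V w A)) as [HA|HA].
    + exists 1, c2. split; [reflexivity|]. left. split; [reflexivity|].
      apply (false_at_perm _ _ _ _ _ (seq_eq_sym _ _ E2)). split; simpl; auto.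
      intros f [<-|Hf]; auto.
    + exists 0, c1. split; [reflexivity|]. left. split; [reflexivity|].
      apply (false_at_perm _ _ _ _ _ (seq_eq_sym _ _ E1)). split; simpl; auto.
      intros f [<-|Hf]; auto.
Qed.

Lemma map_seq_shift (d : nat -> nat) (i : nat) n k :
  map (fun m => match m with 0 => i | S m' => d m' end) (seq (S n) k) = map d (seq n k).
Proof. revert n; induction k; intros n; simpl; auto. f_equal. apply IHk. Qed.

Lemma subproof t i c : is_proof t -> nth_error (t_kids t) i = Some c -> is_proof c.
Proof.
  intros [H1 H2] Hc. split.
  - intros p s Hs. apply (H1 (i :: p)). simpl. rewrite Hc. auto.
  - intros d Hd k.
    set (d' := fun m => match m with 0 => i | S m' => d m' end).
    assert (Hp : forall k, prefix d' (S k) = i :: prefix d k).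
    { intros k'. unfold prefix. simpl. f_equal. apply map_seq_shift. }
    assert (Hd' : inf_branch t d').
    { intros [|k']. simpl. discriminate. rewrite Hp. simpl. rewrite Hc. apply Hd. }
    destruct (H2 d' Hd' (S k)) as [[|j] [Hj [s [Hs Hr]]]]; [lia|].
    exists j. split; [lia|]. exists s. rewrite Hp in Hs. simpl in Hs. rewrite Hc in Hs.
    split; auto.
Qed.

Lemma chain_follow (T : nat -> tree) (d : nat -> nat) :
  (forall n, nth_error (t_kids (T n)) (d n) = Some (T (S n))) ->
  forall k, follow (T 0) (prefix d k) = Some (T k).
Proof.
  intros H.
  assert (G : forall k n, follow (T n) (map d (seq n k)) = Some (T (n + k))).
  { induction k; intros n; simpl. rewrite Nat.add_0_r; auto.
    rewrite H. rewrite IHk. f_equal. f_equal. lia. }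
  intros k. apply (G k 0).
Qed.

Theorem soundness t : is_proof t -> valid (t_seq t).
Proof.
  intros Ht R V Fr w. pose proof Fr as [Hr [Htr Hwf]].
  revert t Ht. induction w as [w IH] using (well_founded_ind Hwf).
  intros t0 Ht0 Hf0.
  assert (Cl : forall t, is_proof t /\ false_at R V w (t_seq t) ->
     exists p : nat * {t | is_proof t /\ false_at R V w (t_seq t)},
       nth_error (t_kids t) (fst p) = Some (proj1_sig (snd p)) /\ rbstep t (fst p) = false).
  { intros t [Ht Hf]. destruct (local_sound R V w t Fr (proj1 Ht nil t eq_refl) Hf)
      as [i [c [Hc [[Hb Hfc]|[Hb [v [Rv [Nv Hfc]]]]]]]].
    - assert (Hpc : is_proof c) by (eapply subproof; eauto).
      exists (i, exist _ c (conj Hpc Hfc)). simpl. auto.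
    - exfalso. apply (IH v (conj Rv Nv) c); auto. eapply subproof; eauto. }
  set (X := {t | is_proof t /\ false_at R V w (t_seq t)}).
  set (nx := fun x : X => proj1_sig (constructive_indefinite_description _ (Cl (proj1_sig x) (proj2_sig x)))).
  assert (Hnx : forall x, nth_error (t_kids (proj1_sig x)) (fst (nx x)) = Some (proj1_sig (snd (nx x)))
                  /\ rbstep (proj1_sig x) (fst (nx x)) = false).
  { intros x. unfold nx. destruct (constructive_indefinite_description _ _). simpl. auto. }
  set (x0 := exist (fun t => is_proof t /\ false_at R V w (t_seq t)) t0 (conj Ht0 Hf0) : X).
  set (Tx := fix Tx (n : nat) : X := match n with 0 => x0 | S m => snd (nx (Tx m)) end).
  set (T := fun n => proj1_sig (Tx n)).
  set (d := fun n => fst (nx (Tx n))).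
  assert (Hch : forall n, nth_error (t_kids (T n)) (d n) = Some (T (S n))).
  { intros n. unfold T, d. simpl. apply Hnx. }
  pose proof (chain_follow T d Hch) as Hfol.
  assert (Hib : inf_branch t0 d).
  { intros k. change t0 with (T 0). rewrite Hfol. discriminate. }
  destruct (proj2 Ht0 d Hib 0) as [j [_ [s [Hs Hrb]]]].
  change t0 with (T 0) in Hs. rewrite Hfol in Hs. injection Hs as <-.
  unfold T, d in Hrb. rewrite (proj2 (Hnx (Tx j))) in Hrb. discriminate.
Qed.

Record st := mkst { Pb : list formula; Ls : list formula; Rs : list formula }.
Inductive kids := K0 | K1 (a : st) | K2 (a b : st).
Record Step := mkStep { ss : sequent; sr : rule; sk : kids }.

Fixpoint pick (test : formula -> bool) (l : list formula) : option (list formula * formula * list formula) :=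
  match l with
  | [] => None
  | f :: l' => if test f then Some ([], f, l') else
      match pick test l' with Some (l1, g, l2) => Some (f :: l1, g, l2) | None => None end
  end.

Lemma pick_some test l l1 f l2 : pick test l = Some (l1, f, l2) -> l = l1 ++ f :: l2 /\ test f = true.
Proof.
  revert l1; induction l as [|a l IH]; intros l1; simpl; [discriminate|].
  destruct (test a) eqn:E. intros H; injection H as <- <- <-; auto.
  destruct (pick test l) as [[[m1 g] m2]|] eqn:E2; [|discriminate].
  intros H; injection H as <- <- <-. destruct (IH m1 eq_refl) as [-> ?]; auto.
Qed.

Lemma pick_none test l : pick test l = None -> forall f, In f l -> test f = false.
Proof.
  induction l as [|a l IH]; simpl; [tauto|].
  destruct (test a) eqn:E; [discriminate|].
  destruct (pick test l) as [[[m1 g] m2]|]; [discriminate|].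
  intros _ f [<-|Hf]; auto.
Qed.

Definition testL f := match f with Imp _ _ | Bx _ => true | _ => false end.
Definition testR f := match f with Imp _ _ => true | _ => false end.
Definition testB (Pi : list formula) f := match f with
  | Bx A => if excluded_middle_informative (valid (map Bx Pi, [A])) then true else false
  | _ => false end.

Definition step (x : st) : Step :=
  let s := (map Bx (Pb x) ++ Ls x, Rs x) in
  let junk := mkStep s rAxBot K0 in
  if excluded_middle_informative (exists p, In (Var p) (Ls x) /\ In (Var p) (Rs x)) then mkStep s rAxVar K0
  else if excluded_middle_informative (In Bot (Ls x)) then mkStep s rAxBot K0
  else match pick testL (Ls x) with
  | Some (L1, Imp C D, L2) => mkStep s rImpL (K2 (mkst (Pb x) (D :: L1 ++ L2) (Rs x)) (mkst (Pb x) (L1 ++ L2) (C :: Rs x)))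
  | Some (L1, Bx B, L2) => mkStep s rRefl (K1 (mkst (B :: Pb x) (B :: L1 ++ L2) (Rs x)))
  | Some _ => junk
  | None => match pick testR (Rs x) with
    | Some (R1, Imp C D, R2) => mkStep s rImpR (K1 (mkst (Pb x) (C :: Ls x) (D :: R1 ++ R2)))
    | Some _ => junk
    | None => match pick (testB (Pb x)) (Rs x) with
      | Some (R1, Bx A, R2) => mkStep s rBox (K2 (mkst (Pb x) (Ls x) (A :: R1 ++ R2)) (mkst [] (map Bx (Pb x)) [A]))
      | _ => junk end end end.

CoFixpoint gen (x : st) : tree :=
  node (ss (step x)) (sr (step x))
    (match sk (step x) with K0 => [] | K1 a => [gen a] | K2 a b => [gen a; gen b] end).
Definition kidsL k := match k with K0 => [] | K1 a => [a] | K2 a b => [a; b] end.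

Definition frob (t : tree) : tree := match t with node s r ts => node s r ts end.
Lemma frob_eq t : t = frob t. Proof. destruct t; reflexivity. Qed.

Lemma gen_eq x : gen x = node (ss (step x)) (sr (step x)) (map gen (kidsL (sk (step x)))).
Proof. rewrite (frob_eq (gen x)). simpl. destruct (sk (step x)); reflexivity. Qed.
Lemma t_kids_gen x : t_kids (gen x) = map gen (kidsL (sk (step x))).
Proof. rewrite gen_eq. reflexivity. Qed.
Lemma t_seq_gen' x : t_seq (gen x) = ss (step x).
Proof. reflexivity. Qed.
Lemma t_rule_gen x : t_rule (gen x) = sr (step x).
Proof. reflexivity. Qed.
Lemma ss_step x : ss (step x) = (map Bx (Pb x) ++ Ls x, Rs x).
Proof.
  unfold step. destruct excluded_middle_informative; auto. destruct excluded_middle_informative; auto.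
  destruct (pick testL (Ls x)) as [[[? f] ?]|]; [destruct f; auto|].
  destruct (pick testR (Rs x)) as [[[? f] ?]|]; [destruct f; auto|].
  destruct (pick (testB (Pb x)) (Rs x)) as [[[? f] ?]|]; [destruct f; auto|]; auto.
Qed.
Lemma t_seq_gen x : t_seq (gen x) = (map Bx (Pb x) ++ Ls x, Rs x).
Proof. rewrite t_seq_gen'. apply ss_step. Qed.
Lemma sr_not_cut x : sr (step x) <> rCut.
Proof.
  unfold step. destruct excluded_middle_informative; simpl; try discriminate. destruct excluded_middle_informative; simpl; try discriminate.
  destruct (pick testL (Ls x)) as [[[? f] ?]|]; [destruct f; simpl; discriminate|].
  destruct (pick testR (Rs x)) as [[[? f] ?]|]; [destruct f; simpl; discriminate|].
  destruct (pick (testB (Pb x)) (Rs x)) as [[[? f] ?]|]; [destruct f; simpl; discriminate|]; simpl; discriminate.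
Qed.

Fixpoint fsize (f : formula) : nat :=
  match f with Var _ => 1 | Bot => 1 | Imp A B => S (fsize A + fsize B) | Bx A => S (fsize A) end.
Fixpoint lsize (l : list formula) : nat := match l with [] => 0 | f :: l' => fsize f + lsize l' end.
Lemma lsize_app l1 l2 : lsize (l1 ++ l2) = lsize l1 + lsize l2.
Proof. induction l1; simpl; lia. Qed.
Definition msr (x : st) := lsize (Ls x) + lsize (Rs x).

Ltac kid_tac := let H := fresh in intros H; apply nth_error_In in H; simpl in H;
  repeat (destruct H as [H|H]; [subst; right; simpl; rewrite ?lsize_app; simpl; lia|]); contradiction.

Lemma step_measure x i y : nth_error (kidsL (sk (step x))) i = Some y ->
  (sr (step x) = rBox /\ i = 1) \/ msr y < msr x.
Proof.
  unfold step. destruct excluded_middle_informative. simpl; kid_tac.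
  destruct excluded_middle_informative. simpl; kid_tac.
  destruct (pick testL (Ls x)) as [[[L1 f] L2]|] eqn:E1.
  { apply pick_some in E1. destruct E1 as [E1 _]. unfold msr. rewrite E1.
    destruct f; simpl; kid_tac. }
  destruct (pick testR (Rs x)) as [[[R1 f] R2]|] eqn:E2.
  { apply pick_some in E2. destruct E2 as [E2 _]. unfold msr. rewrite E2.
    destruct f; simpl; kid_tac. }
  destruct (pick (testB (Pb x)) (Rs x)) as [[[R1 f] R2]|] eqn:E3.
  { apply pick_some in E3. destruct E3 as [E3 _]. unfold msr. rewrite E3.
    destruct f; simpl; try kid_tac.
    destruct i as [|[|i]]; simpl; intros H.
    - injection H as <-; right; simpl; rewrite !lsize_app; simpl; lia.
    - left; auto.
    - apply nth_error_In in H. contradiction. }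
  simpl; kid_tac.
Qed.

Lemma prefix_S (d : nat -> nat) k : prefix d (S k) = d 0 :: prefix (fun n => d (S n)) k.
Proof.
  unfold prefix. simpl. f_equal. rewrite <- seq_shift, map_map. reflexivity.
Qed.

Lemma kid_gen x i c : nth_error (t_kids (gen x)) i = Some c ->
  exists y, c = gen y /\ nth_error (kidsL (sk (step x))) i = Some y.
Proof.
  rewrite t_kids_gen, nth_error_map. destruct (nth_error (kidsL (sk (step x))) i); simpl; [|discriminate].
  intros H; injection H as <-. eauto.
Qed.

Lemma inf_shift t d c : inf_branch t d -> nth_error (t_kids t) (d 0) = Some c ->
  inf_branch c (fun n => d (S n)).
Proof.
  intros H Hc k. specialize (H (S k)). rewrite prefix_S in H. simpl in H. rewrite Hc in H. auto.
Qed.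

Lemma follow_cons t i p : follow t (i :: p) =
  match nth_error (t_kids t) i with Some c => follow c p | None => None end.
Proof. reflexivity. Qed.

Lemma inf_first t d : inf_branch t d -> exists c, nth_error (t_kids t) (d 0) = Some c.
Proof.
  intros H. specialize (H 1). unfold prefix in H; simpl in H.
  destruct (nth_error (t_kids t) (d 0)); [eauto|congruence].
Qed.

Lemma progressA : forall n x, msr x = n -> forall d, inf_branch (gen x) d ->
  exists j s, follow (gen x) (prefix d j) = Some s /\ rbstep s (d j) = true.
Proof.
  intros n. induction n as [n IH] using lt_wf_ind. intros x Hn d Hd.
  destruct (inf_first _ _ Hd) as [c Ec].
  destruct (rbstep (gen x) (d 0)) eqn:Eb.
  { exists 0, (gen x). split; auto. }
  destruct (kid_gen _ _ _ Ec) as [y [-> Ey]].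
  destruct (step_measure _ _ _ Ey) as [[Hb Hi]|Hm].
  { unfold rbstep in Eb. rewrite t_rule_gen, Hb, Hi in Eb. discriminate. }
  destruct (IH (msr y) ltac:(lia) y eq_refl _ (inf_shift _ _ _ Hd Ec)) as [j [s [Hs Hr]]].
  exists (S j), s. rewrite prefix_S, follow_cons, Ec. auto.
Qed.

Lemma progress_gen : forall k x d, inf_branch (gen x) d ->
  exists j, k <= j /\ exists s, follow (gen x) (prefix d j) = Some s /\ rbstep s (d j) = true.
Proof.
  induction k; intros x d Hd.
  - destruct (progressA _ x eq_refl d Hd) as [j Hj]. exists j. split; auto. lia.
  - destruct (inf_first _ _ Hd) as [c Ec].
    destruct (kid_gen _ _ _ Ec) as [y [-> Ey]].
    destruct (IHk y _ (inf_shift _ _ _ Hd Ec)) as [j [Hj [s [Hs Hr]]]].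
    exists (S j). split; [lia|]. exists s. rewrite prefix_S, follow_cons, Ec. auto.
Qed.

Lemma follow_gen : forall p x t, follow (gen x) p = Some t ->
  exists y, t = gen y /\ forall P : st -> Prop, (forall a b, P a -> In b (kidsL (sk (step a))) -> P b) -> P x -> P y.
Proof.
  induction p as [|i p IH]; intros x t H.
  - simpl in H. injection H as <-. exists x. split; auto.
  - rewrite follow_cons in H. destruct (nth_error (t_kids (gen x)) i) as [c|] eqn:Ec; [|discriminate].
    destruct (kid_gen _ _ _ Ec) as [y [-> Ey]].
    destruct (IH _ _ H) as [z [-> Hz]]. exists z. split; auto.
    intros P HP Px. apply Hz; auto. eapply HP; eauto. eapply nth_error_In; eauto.
Qed.

Definition closedL (Pi HL HR : list formula) f := match f with
  | Imp C D => In C HR \/ In D HL | Bx B => In B HL /\ In B Pi | _ => False end.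
Definition closedR (HL HR : list formula) f := match f with
  | Imp C D => In C HL /\ In D HR | Bx A => In A HR | _ => False end.

Definition Good (x : st) : Prop := exists HL HR, valid (HL, HR) /\ incl (Ls x) HL /\ incl (Rs x) HR /\
  (forall f, In f HL -> In f (Ls x) \/ closedL (Pb x) HL HR f) /\
  (forall f, In f HR -> In f (Rs x) \/ closedR HL HR f).

Lemma valid_mono HL HR HL' HR' : incl HL HL' -> incl HR HR' -> valid (HL, HR) -> valid (HL', HR').
Proof. intros H1 H2 Hv R V Fr w [F1 F2]. apply (Hv R V Fr w). split; simpl in *; auto. Qed.

Lemma closedL_mono Pi HL HR Pi' HL' HR' f : incl Pi Pi' -> incl HL HL' -> incl HR HR' ->
  closedL Pi HL HR f -> closedL Pi' HL' HR' f.
Proof. destruct f; simpl; intuition. Qed.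
Lemma closedR_mono HL HR HL' HR' f : incl HL HL' -> incl HR HR' ->
  closedR HL HR f -> closedR HL' HR' f.
Proof. destruct f; simpl; intuition. Qed.

Lemma in_mid (f g : formula) l1 l2 : In f (l1 ++ g :: l2) -> f = g \/ In f (l1 ++ l2).
Proof. intros H. apply in_app_or in H. destruct H as [H|[H|H]]; auto using in_or_app. Qed.
Lemma mid_in (f : formula) l1 l2 : In f (l1 ++ l2) -> In f (l1 ++ f :: l2) \/ True.
Proof. auto. Qed.
Lemma in_mid' (f g : formula) l1 l2 : In f (l1 ++ l2) -> In f (l1 ++ g :: l2).
Proof. intros H. apply in_app_or in H. apply in_or_app. destruct H; simpl; auto. Qed.

Lemma pm (l1 l2 : list formula) a : Permutation (l1 ++ a :: l2) (a :: l1 ++ l2).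
Proof. apply Permutation_sym, Permutation_middle. Qed.

Lemma Good_fresh Pi A : valid (map Bx Pi, [A]) -> Good (mkst [] (map Bx Pi) [A]).
Proof.
  intros Hv. exists (map Bx Pi), [A]. simpl. repeat split; auto using incl_refl.
Qed.

Definition gR (good : nat -> Prop) (Ri : nat -> U -> U -> Prop) (wi : nat -> U) (a b : U) : Prop :=
  match a, b with
  | Root, Root => True
  | Root, Br i u => good i /\ Ri i (wi i) u
  | Br _ _, Root => False
  | Br i u, Br j v => i = j /\ Ri i u v
  end.
Definition gV (L : list formula) (Vi : nat -> nat -> U -> Prop) (p : nat) (a : U) : Prop :=
  match a with Root => In (Var p) L | Br i u => Vi i p u end.

Lemma transfer good Ri wi L Vi : forall f i u,
  sat (gR good Ri wi) (gV L Vi) (Br i u) f <-> sat (Ri i) (Vi i) u f.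
Proof.
  induction f; intros i u; simpl; try tauto.
  - rewrite IHf1, IHf2. tauto.
  - split.
    + intros H v Hv. apply IHf. apply H. simpl. auto.
    + intros H [|j v] Hv; simpl in Hv; [contradiction|]. destruct Hv as [<- Hv]. apply IHf. auto.
Qed.

Lemma gframe good Ri wi : (forall i, frame (Ri i)) -> frame (gR good Ri wi).
Proof.
  intros Hf. split; [|split].
  - intros [|i u]; simpl; auto. split; auto. apply (Hf i).
  - intros [|i u] [|j v] [|k z]; simpl; try tauto.
    + intros [G1 H1] [<- H2]. split; auto. eapply (Hf _); eauto.
    + intros [<- H1] [<- H2]. split; auto. eapply (Hf _); eauto.
  - assert (HB : forall i u, Acc (fun v w => gR good Ri wi w v /\ v <> w) (Br i u)).
    { intros i u. destruct (Hf i) as [_ [_ Hw]]. induction (Hw u) as [u _ IH].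
      constructor. intros [|j v] [Hy Hne]; simpl in Hy; [contradiction|].
      destruct Hy as [<- Hy]. apply IH. split; auto. intros ->. auto. }
    intros [|i u]; auto. constructor. intros [|j v] [Hy Hne]; [congruence|]. auto.
Qed.

Lemma frame_eq : frame eq.
Proof.
  split; [|split]; auto. intros; congruence.
  intros a; constructor; intros y [Hy Hne]; congruence.
Qed.

Lemma saturation x : Good x -> ~ (exists p, In (Var p) (Ls x) /\ In (Var p) (Rs x)) -> ~ In Bot (Ls x) ->
  (forall f, In f (Ls x) -> testL f = false) -> (forall f, In f (Rs x) -> testR f = false) ->
  (forall A, In (Bx A) (Rs x) -> ~ valid (map Bx (Pb x), [A])) -> False.
Proof.
  destruct x as [Pi L R]; simpl.
  intros [HL [HR [Hv [HiL [HiR [CL CR]]]]]] Hax Hbot TL TR TB. simpl in *.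
  assert (CM : forall i : nat, exists M : (U -> U -> Prop) * (nat -> U -> Prop) * U,
     frame (fst (fst M)) /\ forall A, nth_error R i = Some (Bx A) ->
       false_at (fst (fst M)) (snd (fst M)) (snd M) (map Bx Pi, [A])).
  { intros i. destruct (classic (exists A, nth_error R i = Some (Bx A))) as [[A HA]|HN].
    - assert (Hn := TB A (nth_error_In _ _ HA)). unfold valid in Hn.
      apply not_all_ex_not in Hn. destruct Hn as [R0 Hn].
      apply not_all_ex_not in Hn. destruct Hn as [V0 Hn].
      apply imply_to_and in Hn. destruct Hn as [Fr Hn].
      apply not_all_ex_not in Hn. destruct Hn as [w0 Hn]. apply NNPP in Hn.
      exists (R0, V0, w0). simpl. split; auto. intros A' HA'. rewrite HA in HA'.
      injection HA' as <-. auto.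
    - exists (eq, fun _ _ => False, Root). simpl. split; [apply frame_eq|].
      intros A HA. exfalso. eauto. }
  set (Mi := fun i => proj1_sig (constructive_indefinite_description _ (CM i))).
  assert (HMi : forall i, frame (fst (fst (Mi i))) /\ forall A, nth_error R i = Some (Bx A) ->
       false_at (fst (fst (Mi i))) (snd (fst (Mi i))) (snd (Mi i)) (map Bx Pi, [A])).
  { intros i. unfold Mi. destruct (constructive_indefinite_description _ _). auto. }
  set (Ri := fun i => fst (fst (Mi i))). set (Vi := fun i => snd (fst (Mi i))). set (wi := fun i => snd (Mi i)).
  set (good := fun i => exists A, nth_error R i = Some (Bx A)).
  set (RR := gR good Ri wi). set (VV := gV L Vi).
  assert (FR : frame RR) by (apply gframe; intros i; apply (HMi i)).
  assert (Tr : forall f, (In f HL -> sat RR VV Root f) /\ (In f HR -> ~ sat RR VV Root f)).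
  { induction f as [p| |C IHC D IHD|B IHB].
    - split.
      + intros H. destruct (CL _ H) as [H'|[]]. simpl. exact H'.
      + intros H. destruct (CR _ H) as [H'|[]]. simpl. intros H2. apply Hax. eauto.
    - split; simpl; auto. intros H. destruct (CL _ H) as [H'|[]]. contradiction.
    - split.
      + intros H. destruct (CL _ H) as [H'|[H'|H']].
        * specialize (TL _ H'). discriminate.
        * intros HC. exfalso. apply (proj2 IHC H' HC).
        * intros _. apply (proj1 IHD H').
      + intros H. destruct (CR _ H) as [H'|[H1 H2]].
        * specialize (TR _ H'). discriminate.
        * simpl. intros HI. apply (proj2 IHD H2). apply HI. apply (proj1 IHC H1).
    - split.
      + intros H. destruct (CL _ H) as [H'|[H1 H2]].
        * specialize (TL _ H'). discriminate.
        * simpl. intros [|i u] Hw.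
          -- apply (proj1 IHB H1).
          -- destruct Hw as [[A HA] Hu]. unfold VV, RR. apply transfer.
             destruct (proj2 (HMi i) A HA) as [F1 _]. simpl in F1.
             apply (F1 (Bx B)); [apply in_map; auto|]. exact Hu.
      + intros H. destruct (CR _ H) as [H'|H'].
        * destruct (In_nth_error _ _ H') as [i Hi].
          destruct (proj2 (HMi i) B Hi) as [_ F2]. simpl in F2.
          intros HS. apply (F2 B (or_introl eq_refl)).
          assert (HS' := HS (Br i (wi i))). unfold RR, VV in HS'. rewrite transfer in HS'.
          apply HS'. simpl. split; [exists B; auto|]. apply (HMi i).
        * intros HS. apply (proj2 IHB H'). apply HS. simpl. auto. }
  apply (Hv RR VV FR Root). split; simpl; intros f Hf; apply (Tr f); auto.
Qed.

Ltac ptac := cbn [fst snd]; first [ apply Permutation_refl | apply pm | rewrite !app_assoc; apply pm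
  | apply perm_skip; first [apply pm | rewrite !app_assoc; apply pm]
  | apply Permutation_app_comm | apply Permutation_sym, Permutation_middle ].

Lemma Good_step x : Good x -> local_ok (gen x) /\ forall y, In y (kidsL (sk (step x))) -> Good y.
Proof.
  intros HG. pose proof HG as [HL [HR [Hv [HiL [HiR [CL CR]]]]]].
  rewrite gen_eq. unfold local_ok. rewrite ss_step. cbn [t_seq t_rule t_kids].
  destruct x as [Pi L R]; cbn [Pb Ls Rs] in *.
  unfold step; cbn [Pb Ls Rs].
  destruct excluded_middle_informative as [Hax|Hax].
  { cbn. split; [|tauto]. destruct Hax as [p [H1 H2]]. exists p. split; auto. apply in_or_app; auto. }
  destruct excluded_middle_informative as [Hbot|Hbot].
  { cbn. split; [|tauto]. apply in_or_app; auto. }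
  destruct (pick testL L) as [[[L1 f] L2]|] eqn:E1.
  { apply pick_some in E1. destruct E1 as [-> Tf].
    destruct f as [p| |C D|B]; try discriminate.
    - cbn [sr sk kidsL map]. rewrite !t_seq_gen. cbn [Pb Ls Rs]. split.
      + exists (map Bx Pi ++ L1 ++ L2), R, C, D. split; [|split]; split; ptac.
      + intros y [<-|[<-|[]]].
        * exists (D :: HL), HR. cbn. split; [|split; [|split; [|split]]].
          -- apply (valid_mono HL HR); auto; intros ? ?; simpl; auto.
          -- intros g [<-|Hg]; simpl; auto. right; apply HiL; apply in_mid'; auto.
          -- auto.
          -- intros g [<-|Hg]; simpl; auto. destruct (CL g Hg) as [H|H].
             ++ apply in_mid in H. destruct H as [->|H]; auto. right; simpl; auto.
             ++ right. eapply closedL_mono; [..|exact H]; intros ? ?; simpl; auto.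
          -- intros g Hg. destruct (CR g Hg) as [H|H]; auto. right. eapply closedR_mono; [..|exact H]; intros ? ?; simpl; auto.
        * exists HL, (C :: HR). cbn. split; [|split; [|split; [|split]]].
          -- apply (valid_mono HL HR); auto; intros ? ?; simpl; auto.
          -- intros g Hg. apply HiL; apply in_mid'; auto.
          -- intros g [<-|Hg]; simpl; auto.
          -- intros g Hg. destruct (CL g Hg) as [H|H].
             ++ apply in_mid in H. destruct H as [->|H]; auto. right; simpl; auto.
             ++ right. eapply closedL_mono; [..|exact H]; intros ? ?; simpl; auto.
          -- intros g [<-|Hg]; simpl; auto. destruct (CR g Hg) as [H|H]; auto. right. eapply closedR_mono; [..|exact H]; intros ? ?; simpl; auto.
    - cbn [sr sk kidsL map]. rewrite !t_seq_gen. cbn [Pb Ls Rs]. split.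
      + exists (map Bx Pi ++ L1 ++ L2), R, B. split; split; ptac.
      + intros y [<-|[]].
        exists (B :: HL), HR. cbn. split; [|split; [|split; [|split]]].
        -- apply (valid_mono HL HR); auto; intros ? ?; simpl; auto.
        -- intros g [<-|Hg]; simpl; auto. right; apply HiL; apply in_mid'; auto.
        -- auto.
        -- intros g [<-|Hg]; simpl; auto. destruct (CL g Hg) as [H|H].
           ++ apply in_mid in H. destruct H as [->|H]; auto. right; simpl; auto.
           ++ right. eapply closedL_mono; [..|exact H]; intros ? ?; simpl; auto.
        -- intros g Hg. destruct (CR g Hg) as [H|H]; auto. right. eapply closedR_mono; [..|exact H]; intros ? ?; simpl; auto. }
  destruct (pick testR R) as [[[R1 f] R2]|] eqn:E2.
  { apply pick_some in E2. destruct E2 as [-> Tf].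
    destruct f as [p| |C D|B]; try discriminate.
    cbn [sr sk kidsL map]. rewrite !t_seq_gen. cbn [Pb Ls Rs]. split.
    + exists (map Bx Pi ++ L), (R1 ++ R2), C, D. split; split; ptac.
    + intros y [<-|[]].
      exists (C :: HL), (D :: HR). cbn. split; [|split; [|split; [|split]]].
      -- apply (valid_mono HL HR); auto; intros ? ?; simpl; auto.
      -- intros g [<-|Hg]; simpl; auto.
      -- intros g [<-|Hg]; simpl; auto. right; apply HiR; apply in_mid'; auto.
      -- intros g [<-|Hg]; simpl; auto. destruct (CL g Hg) as [H|H]; simpl; auto.
         right. eapply closedL_mono; [..|exact H]; intros ? ?; simpl; auto.
      -- intros g [<-|Hg]; simpl; auto. destruct (CR g Hg) as [H|H].
         ++ apply in_mid in H. destruct H as [->|H]; auto. right; simpl; auto.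
         ++ right. eapply closedR_mono; [..|exact H]; intros ? ?; simpl; auto. }
  destruct (pick (testB Pi) R) as [[[R1 f] R2]|] eqn:E3.
  { apply pick_some in E3. destruct E3 as [-> Tf].
    destruct f as [p| |C D|A]; try discriminate.
    unfold testB in Tf. destruct excluded_middle_informative as [HvA|]; [|discriminate].
    cbn [sr sk kidsL map]. rewrite !t_seq_gen. cbn [Pb Ls Rs]. split.
    + exists L, Pi, (R1 ++ R2), A. split; [|split]; split; ptac.
    + intros y [<-|[<-|[]]].
      * exists HL, (A :: HR). cbn. split; [|split; [|split; [|split]]].
        -- apply (valid_mono HL HR); auto; intros ? ?; simpl; auto.
        -- auto.
        -- intros g [<-|Hg]; simpl; auto. right; apply HiR; apply in_mid'; auto.
        -- intros g Hg. destruct (CL g Hg) as [H|H]; auto.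
           right. eapply closedL_mono; [..|exact H]; intros ? ?; simpl; auto.
        -- intros g [<-|Hg]; simpl; auto. destruct (CR g Hg) as [H|H].
           ++ apply in_mid in H. destruct H as [->|H]; auto. right; simpl; auto.
           ++ right. eapply closedR_mono; [..|exact H]; intros ? ?; simpl; auto.
      * apply Good_fresh; auto. }
  exfalso. apply (saturation (mkst Pi L R) HG); cbn; auto.
  - intros f Hf. apply (pick_none _ _ E1 f Hf).
  - intros f Hf. apply (pick_none _ _ E2 f Hf).
  - intros A HA HvA. assert (Ht := pick_none _ _ E3 _ HA). unfold testB in Ht.
    destruct excluded_middle_informative; [discriminate|contradiction].
Qed.

Theorem gen_proof x : Good x -> is_proof (gen x).
Proof.
  intros HG. split.
  - intros p s Hs. destruct (follow_gen p x s Hs) as [y [-> Hy]].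
    apply (Good_step y). apply (Hy Good); auto. intros a b Ha Hb. apply (proj2 (Good_step a Ha)); auto.
  - intros d Hd k. apply progress_gen; auto.
Qed.

Lemma gen_nocut x : forall p s, follow (gen x) p = Some s -> t_rule s <> rCut.
Proof.
  intros p s Hs. destruct (follow_gen p x s Hs) as [y [-> _]]. rewrite t_rule_gen. apply sr_not_cut.
Qed.

Lemma Good_init G D : valid (G, D) -> Good (mkst [] G D).
Proof. intros Hv. exists G, D. cbn. repeat split; auto using incl_refl. Qed.

Definition canon (A : formula) (p : proof) : sequent :=
  epsilon (inhabits ([], [])) (fun s => seq_eq (fst s, snd s ++ [A]) (t_seq (ptree p))).

Definition uS (s : sequent) (p : proof) : proof :=
  match excluded_middle_informative (valid s) with
  | left H => exist _ (gen (mkst [] (fst s) (snd s))) (gen_proof _ (Good_init (fst s) (snd s) H))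
  | right _ => p
  end.

Definition uA (A : formula) (p q : proof) : proof := uS (canon A p) p.

Lemma some_inj {X} (o : option X) a b : o = Some a -> o = Some b -> a = b.
Proof. intros -> H; injection H; auto. Qed.

CoFixpoint feq_refl n t : feq n t t :=
  match n with
  | 0 => feq0 t t
  | S k => match t with node s r ts =>
      feqS k s s r ts ts (conj (Permutation_refl _) (Permutation_refl _)) eq_refl
        (fun i c1 c2 H1 H2 =>
           match some_inj _ _ _ H1 H2 in _ = c return
             ((rbstep (node s r ts) i = true -> seq_eq (t_seq c1) (t_seq c) /\ feq k c1 c) /\
                (rbstep (node s r ts) i = false -> feq (S k) c1 c)) with
           | eq_refl => conj (fun _ => conj (conj (Permutation_refl _) (Permutation_refl _)) (feq_refl k c1))
                                      (fun _ => feq_refl (S k) c1)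
           end)
    end
  end.

Lemma seq_eq_trans s1 s2 s3 : seq_eq s1 s2 -> seq_eq s2 s3 -> seq_eq s1 s3.
Proof. intros [a b] [c d]; split; eapply Permutation_trans; eauto. Qed.

Lemma feq_root k t1 t2 : feq (S k) t1 t2 -> seq_eq (t_seq t1) (t_seq t2).
Proof. intros H. inversion H; subst. simpl. auto. Qed.

Lemma canon_eq A p p' : seq_eq (t_seq (ptree p)) (t_seq (ptree p')) -> canon A p = canon A p'.
Proof.
  intros H. unfold canon. f_equal. apply functional_extensionality. intros s.
  apply propositional_extensionality. split; intros H'.
  - eapply seq_eq_trans; eauto.
  - eapply seq_eq_trans; eauto. apply seq_eq_sym; auto.
Qed.

Theorem lemma6p4 : forall A : formula,
  exists u : proof -> proof -> proof, removing A u /\ adequate u.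
Proof.
  intros A. exists (uA A). split; [split|].
  - intros n p p' q q' Hp Hq. destruct n as [|k]; [apply feq0|].
    unfold uA. rewrite (canon_eq A p p' (feq_root _ _ _ Hp)).
    unfold uS. destruct (excluded_middle_informative (valid (canon A p'))).
    + unfold sim; simpl. apply feq_refl.
    + auto.
  - intros G D p q Hp Hq.
    assert (Hs : seq_eq (fst (canon A p), snd (canon A p) ++ [A]) (t_seq (ptree p))).
    { unfold canon. apply (epsilon_spec (inhabits ([], []))
        (fun s => seq_eq (fst s, snd s ++ [A]) (t_seq (ptree p)))).
      exists (G, D). apply seq_eq_sym. exact Hp. }
    set (s := canon A p) in *.
    assert (E := seq_eq_trans _ _ _ Hs Hp). destruct E as [EG ED]. cbn [fst snd] in EG, ED.
    apply Permutation_app_inv_r in ED.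
    assert (Hv : valid s).
    { intros R V Fr w [F1 F2].
      destruct (classic (sat R V w A)) as [HA|HA].
      - apply (soundness _ (proj2_sig q) R V Fr w).
        apply (false_at_perm _ _ _ (A :: G, D)); [apply seq_eq_sym; exact Hq|].
        split; cbn [fst snd].
        + intros f [<-|Hf]; auto. apply F1. eapply Permutation_in; [apply Permutation_sym, EG|]; auto.
        + intros f Hf. apply F2. eapply Permutation_in; [apply Permutation_sym, ED|]; auto.
      - apply (soundness _ (proj2_sig p) R V Fr w).
        apply (false_at_perm _ _ _ (G, D ++ [A])); [apply seq_eq_sym; exact Hp|].
        split; cbn [fst snd].
        + intros f Hf. apply F1. eapply Permutation_in; [apply Permutation_sym, EG|]; auto.
        + intros f Hf. apply in_app_or in Hf. destruct Hf as [Hf|[<-|[]]]; auto.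
          apply F2. eapply Permutation_in; [apply Permutation_sym, ED|]; auto. }
    unfold uA, uS. fold s. destruct (excluded_middle_informative (valid s)); [|contradiction].
    unfold proves. simpl ptree. rewrite t_seq_gen. cbn. split; auto.
  - intros n p q Hp Hq. unfold uA, uS.
    destruct (excluded_middle_informative (valid (canon A p))); auto.
    intros path s Hs _. exact (gen_nocut _ path s Hs).
Qed.

Print Assumptions lemma6p4.
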